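(* Let $n = 6k+r$ with integers $k\ge 0$ and $r\in\{0,1,2,3,4,5\}$. There is no balanced permutation sequence of length $n$ in each of the following cases: $r=0$ and $k\ge 2$; $r=1$ and $k\ge 11$; $r=2$ and $k\ge 3$; $r=3$ and $k\ge 8$; $r=4$ and $k\ge 4$; $r=5$ and $k\ge 9$.
   Context: Let $n$ be a positive integer, $N$ a set of $n$ players and $[n]=\{1,\ldots,n\}$ a set of $n$ items. A permutation sequence of length $n$ is an ordered tuple $(\pi_1,\ldots,\pi_n)$ of bijections $\pi_t : N\to[n]$; on day $t$ player $i$ receives item $\pi_t(i)$. For $t\in[n]$ and $i\in N$, $Z_i^t$ is the multiset $\{\pi_1(i),\ldots,\pi_t(i)\}$, and for $j\in[t]$, $Z_i^t[j]$ is the $j$-th smallest element of $Z_i^t$ (counted with multiplicity). The sequence is called balanced if for every $t\in[n]$, every $i\in N$ and every $j\in[t]$: $Z_i^t[j]\le \lceil jn/t\rceil$. *)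

(* Defs.v *)
From mathcomp Require Import all_boot perm.
Set Implicit Arguments. Unset Strict Implicit. Unset Printing Implicit Defensive.

(* Players N := 'I_n ; items [n] = {1,...,n} represented by 'I_n via k |-> k+1.
   A permutation sequence of length n: day d : 'I_n (day t = d+1) gives a
   bijection pi d : {perm 'I_n}; player i receives item (pi d i).+1. *)
Definition perm_seq_of_length (n : nat) := 'I_n -> {perm 'I_n}.

Definition ceildiv (a t : nat) : nat := (a + t.-1) %/ t.

Definition Z (n : nat) (pi : perm_seq_of_length n) (i : 'I_n) (t : nat) : seq nat :=
  sort leq [seq (pi d i).+1 | d : 'I_n <- enum 'I_n & (d < t)%N].

Definition Zj (n : nat) (pi : perm_seq_of_length n) (i : 'I_n) (t j : nat) : nat :=
  nth 0 (Z pi i t) j.-1.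

Definition balanced (n : nat) (pi : perm_seq_of_length n) : Prop :=
  forall (t : nat), 1 <= t <= n -> forall (i : 'I_n) (j : nat), 1 <= j <= t ->
    Zj pi i t j <= ceildiv (j * n) t.

(* Main.v *)
Require Import Defs.
From mathcomp Require Import all_boot perm zify.

Lemma nth_sort_count (s : seq nat) (j c : nat) :
  0 < j <= size s -> nth 0 (sort leq s) j.-1 <= c ->
  j <= count (fun x => x <= c) s.
Proof.
move=> /andP[j0 js] hc.
rewrite -(count_sort leq).
set s' := sort leq s.
have ss : sorted leq s' by apply: sort_sorted; exact: leq_total.
have sz : size s' = size s by rewrite size_sort.
have hall : all (fun x => x <= c) (take j s').
  apply/(all_nthP 0) => k; rewrite size_take sz.
  have -> : (if j < size s then j else size s) = j.
    by case: ltnP => // h; apply/eqP; rewrite eqn_leq js h.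
  move=> kj; rewrite nth_take //.
  apply: leq_trans hc.
  apply: (sorted_leq_nth leq_trans leqnn 0 ss); rewrite ?inE ?sz; lia.
rewrite -(cat_take_drop j s') count_cat.
rewrite all_count in hall; rewrite (eqP hall).
rewrite size_take sz.
case: ltnP => h; lia.
Qed.

Lemma Zlist n' (pi : perm_seq_of_length n'.+1) (i : 'I_n'.+1) t : t <= n'.+1 ->
 [seq (pi d i).+1 | d : 'I_n'.+1 <- enum 'I_n'.+1 & (d < t)%N] =
 [seq (pi (inord k) i).+1 | k <- iota 0 t].
Proof.
move=> tn.
have -> : [seq (pi d i).+1 | d : 'I_n'.+1 <- enum 'I_n'.+1 & (d < t)%N] =
   map (fun k => (pi (inord k) i).+1) (map val (filter (fun d : 'I_n'.+1 => (d < t)%N) (enum 'I_n'.+1))).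
  rewrite -map_comp; apply: eq_map => d /=; by rewrite inord_val.
congr map.
have := filter_map val (fun k => k < t) (enum 'I_n'.+1).
rewrite /preim /= => <-.
rewrite val_enum_ord. have := filter_iota_ltn 0 tn. rewrite add0n => <-. done.
Qed.

Lemma sum_ind0 n c : \sum_(i < n) (c <= i : nat) = n - c.
Proof.
elim: n => [|n IH]; first by rewrite big_ord0.
rewrite big_ord_recr /= IH.
case: leqP => h; lia.
Qed.

Lemma sum_ind n (p : {perm 'I_n}) c :
  \sum_(i < n) (c <= p i : nat) = n - c.
Proof.
rewrite -(sum_ind0 n c).
by rewrite (reindex_inj (h := p) (P := xpredT) (F := fun i : 'I_n => (c <= i : nat)) (@perm_inj _ p)).
Qed.

Lemma key n (pi : perm_seq_of_length n) : 4 <= n -> balanced pi ->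
  3 * n <= 4 * ceildiv (1 * n) 2 + 2 * ceildiv (1 * n) 3 + ceildiv (1 * n) 4.
Proof.
case: n pi => [|n'] pi // n4 bal.
set n := n'.+1.
set h := ceildiv (1 * n) 2.
set s := ceildiv (1 * n) 3.
set q := ceildiv (1 * n) 4.
set h4 := ceildiv (2 * n) 4.
have hh4 : h4 = h by rewrite /h4 /h /ceildiv /=; lia.
have qs : q <= s by rewrite /q /s /ceildiv /=; lia.
have sh : s <= h by rewrite /h /s /ceildiv /=; lia.
have hn : h <= n by rewrite /h /ceildiv /=; lia.
have cnt : forall i t j, 1 <= t <= n -> 1 <= j <= t ->
    j <= count (fun x => x <= ceildiv (j * n) t) [seq (pi (inord k) i).+1 | k <- iota 0 t].
  move=> i t j ht hj.
  have := bal t ht i j hj.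
  rewrite /Zj /Z Zlist; last by case/andP: ht.
  apply: nth_sort_count; rewrite size_map size_iota //.
have per : forall i : 'I_n,
   (s <= pi (inord 0) i) + (h <= pi (inord 0) i) + ((s <= pi (inord 1) i) + (h <= pi (inord 1) i))
   + ((q <= pi (inord 2) i) + (h <= pi (inord 2) i)) + (1 + (h <= pi (inord 3) i)) <= 5.
  move=> i.
  have c2 := cnt i 2 1 ltac:(rewrite /n; lia) isT.
  have c3 := cnt i 3 1 ltac:(rewrite /n; lia) isT.
  have c4a := cnt i 4 1 ltac:(rewrite /n; lia) isT.
  have c4b := cnt i 4 2 ltac:(rewrite /n; lia) isT.
  rewrite -/h -/s -/q -/h4 hh4 /= in c2 c3 c4a c4b.
  move: c2 c3 c4a c4b.
  set a := pi (inord 0) i; set b := pi (inord 1) i; set c := pi (inord 2) i; set d := pi (inord 3) i.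
  case: (leqP h a); case: (leqP h b); case: (leqP h c); case: (leqP h d);
  case: (leqP s a); case: (leqP s b); case: (leqP s c);
  case: (leqP q a); case: (leqP q b); case: (leqP q c); case: (leqP q d); simpl; lia.
have : \sum_(i < n) ((s <= pi (inord 0) i) + (h <= pi (inord 0) i) + ((s <= pi (inord 1) i) + (h <= pi (inord 1) i))
   + ((q <= pi (inord 2) i) + (h <= pi (inord 2) i)) + (1 + (h <= pi (inord 3) i))) <= \sum_(i < n) 5.
  by apply: leq_sum => i _; apply: per.
rewrite !big_split /= !sum_ind sum_nat_const card_ord.
rewrite big_const card_ord iter_addn_0 => H.
lia.
Qed.

Theorem mainTheorem3 (k r : nat) :
  r < 6 ->
  (r = 0 /\ 2 <= k) \/ (r = 1 /\ 11 <= k) \/ (r = 2 /\ 3 <= k) \/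
  (r = 3 /\ 8 <= k) \/ (r = 4 /\ 4 <= k) \/ (r = 5 /\ 9 <= k) ->
  ~ exists pi : perm_seq_of_length (6 * k + r), balanced pi.
Proof.
move=> r6 hc [pi bal].
have n4 : 4 <= 6 * k + r by lia.
have := @key _ pi n4 bal.
rewrite /ceildiv /=.
lia.
Qed.
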